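(* Let $X$ be a set with $|X|=n\ge2$ and let $g\in\Gamma_i(X)$ for some $i\ge1$. Then $|\Gamma(g)|=\frac{2^{2i-1}(3n-5)+4}{3}$ and $|\Gamma_{i+1}(X)|=\frac{4^{i-1}(3n-5)+2}{3}\,|\Gamma_i(X)|$.
   Context: Let $1$ be a symbol not in $X$. Elements of height $\ge 2$ are triples $g=(g^l,g^c,g^r)$; $\Gamma_0(X)=\{1\}$, $\Gamma_1(X)=X$, each $x\in X$ identified with the triple $(1,x,1)$ (so $x^l=x^r=1$); for $i\ge 2$, $\Gamma_i(X)$ is the set of triples $g\in\Gamma_{i-1}(X)\times\Gamma_{i-2}(X)\times\Gamma_{i-1}(X)$ with $g^l\neq g^r$ and $g^c\in\{(g^l)^l,(g^l)^r\}\cap\{(g^r)^l,(g^r)^r\}$; $\Gamma(X)=\bigcup_{i\ge0}\Gamma_i(X)$. For $g\in\Gamma(X)$, $\Gamma(g)=\{g_1\in\Gamma(X): g_1^l=g\text{ or }g_1^r=g\}$. *)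

(* Defs.v *)
From mathcomp Require Import all_boot.
From Stdlib Require Import List.

Set Implicit Arguments.
Unset Strict Implicit.
Unset Printing Implicit Defensive.

(* Elements of Gamma(X): the symbol 1 (One), elements x of X (Leaf x,
   identified with the triple (1,x,1)), and triples (Node l c r). *)
Inductive gam (X : Type) : Type :=
| One : gam X
| Leaf : X -> gam X
| Node : gam X -> gam X -> gam X -> gam X.
Arguments One {X}.

Definition gl {X : Type} (g : gam X) : gam X :=
  match g with Node a _ _ => a | _ => One end.
Definition gr {X : Type} (g : gam X) : gam X :=
  match g with Node _ _ c => c | _ => One end.
Definition gc {X : Type} (g : gam X) : gam X :=
  match g with Node _ b _ => b | Leaf x => Leaf x | One => One end.

Fixpoint Gam {X : Type} (i : nat) (g : gam X) {struct i} : Prop :=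
  match i with
  | 0 => g = One
  | 1 => exists x, g = Leaf x
  | S ((S k) as j) =>
      Gam j (gl g) /\ Gam k (gc g) /\ Gam j (gr g) /\
      (exists a b c, g = Node a b c) /\
      gl g <> gr g /\
      (gc g = gl (gl g) \/ gc g = gr (gl g)) /\
      (gc g = gl (gr g) \/ gc g = gr (gr g))
  end.

Definition GamAll {X : Type} (g : gam X) : Prop := exists i, Gam i g.

Definition GamOf {X : Type} (g : gam X) (g1 : gam X) : Prop :=
  GamAll g1 /\ (gl g1 = g \/ gr g1 = g).

Definition has_card {T : Type} (P : T -> Prop) (n : nat) : Prop :=
  exists s : list T, NoDup s /\ (forall x, In x s <-> P x) /\ length s = n.

(* Main.v *)
Require Import Defs.
From mathcomp Require Import all_boot zify.
From Stdlib Require Import List.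
Set Implicit Arguments.
Unset Strict Implicit.

Section Card.
Variables T U : Type.

Lemma hc_ext (P Q : T -> Prop) n :
  (forall x, P x <-> Q x) -> has_card P n -> has_card Q n.
Proof.
move=> H [s [Hn [Hs Hl]]]; exists s; split=>//; split=>// x.
split; [move/Hs/H | move/H/Hs]; done.
Qed.

Lemma hc_uniq (P : T -> Prop) a b : has_card P a -> has_card P b -> a = b.
Proof.
move=> [s [Hn [Hs <-]]] [s' [Hn' [Hs' <-]]].
have h1 := NoDup_incl_length Hn (fun x hx => proj2 (Hs' x) (proj1 (Hs x) hx)).
have h2 := NoDup_incl_length Hn' (fun x hx => proj2 (Hs x) (proj1 (Hs' x) hx)).
lia.
Qed.

Lemma hc_union (P Q : T -> Prop) a b : has_card P a -> has_card Q b ->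
  (forall x, P x -> Q x -> False) -> has_card (fun x => P x \/ Q x) (a + b).
Proof.
move=> [s [Hn [Hs <-]]] [s' [Hn' [Hs' <-]]] D.
exists (List.app s s'); split; last split.
- apply: NoDup_app => // x /Hs hx /Hs' hx'; exact: D hx hx'.
- move=> x; rewrite in_app_iff; split.
  + by case=> [/Hs|/Hs']; [left|right].
  + by case=> [/Hs|/Hs']; [left|right].
- by rewrite length_app.
Qed.

Lemma NoDup_map_inj (f : T -> U) s : (forall x y, f x = f y -> x = y) ->
  NoDup s -> NoDup (map f s).
Proof.
move=> inj; elim: s => [|a s IH] /=; first by constructor.
move=> H; inversion H; subst; constructor; last exact: IH.
by move/in_map_iff=> [y [/inj -> hy]].
Qed.

Lemma hc_img (P : T -> Prop) (f : T -> U) a : (forall x y, f x = f y -> x = y) ->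
  has_card P a -> has_card (fun y => exists x, P x /\ y = f x) a.
Proof.
move=> inj [s [Hn [Hs <-]]]; exists (map f s); split; last split.
- exact: NoDup_map_inj.
- move=> y; rewrite in_map_iff; split.
  + by move=> [x [<- /Hs hx]]; exists x.
  + by move=> [x [/Hs hx ->]]; exists x.
- by rewrite length_map.
Qed.

Lemma hc_remove (P : T -> Prop) m g : has_card P m -> P g ->
  has_card (fun x => P x /\ x <> g) (m - 1).
Proof.
move=> [s [Hn [Hs <-]]] Pg.
have [s1 [s2 E]] := in_split _ _ (proj2 (Hs g) Pg); subst s.
exists (List.app s1 s2); split; last split.
- exact: NoDup_remove_1 _ _ _ Hn.
- move=> x; split.
  + move=> hx; split; first by apply/Hs; move: hx; rewrite !in_app_iff /=; tauto.
    move=> exg; subst x. exact: (NoDup_remove_2 _ _ _ Hn hx).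
  + move=> [/Hs hx nx]; move: hx; rewrite !in_app_iff /=.
    by case=> [|[|]]; [left| move=> e; case: nx | right].
- rewrite !length_app /=; lia.
Qed.

Lemma hc_sigma (s : list U) (F : U -> T -> Prop) k : NoDup s ->
  (forall l, In l s -> has_card (F l) k) ->
  (forall l l' x, F l x -> F l' x -> l = l') ->
  has_card (fun x => exists l, In l s /\ F l x) (k * length s).
Proof.
move=> + + D; elim: s => [|a s IH] Hn Hc /=.
- exists nil; split; first constructor; split; last by rewrite muln0.
  by move=> x; split=> //= [[l [[]]]].
- inversion Hn; subst.
  have -> : k * (length s).+1 = k + k * length s by lia.
  have Hc' : forall l, In l s -> has_card (F l) k by move=> l hl; apply: Hc; right.
  have Dj : forall x, F a x -> (exists l, In l s /\ F l x) -> False.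
    move=> x hx [l [hl hx']]; have e := D _ _ _ hx hx'; subst l; done.
  have Hu := hc_union (Hc a (or_introl erefl)) (IH H2 Hc') Dj.
  apply: hc_ext Hu => x; split.
  * by case=> [hx|[l [hl hx]]]; [exists a; split; [left|] | exists l; split; [right|]].
  * by move=> [l [[<-|hl] hx]]; [left | right; exists l].
Qed.

End Card.

Section Gamma.
Variable X : finType.
Implicit Types g l r c : gam X.

Lemma Gam_SS k g : Gam k.+2 g =
  (Gam k.+1 (gl g) /\ Gam k (gc g) /\ Gam k.+1 (gr g) /\
      (exists a b c, g = Node a b c) /\
      gl g <> gr g /\
      (gc g = gl (gl g) \/ gc g = gr (gl g)) /\
      (gc g = gl (gr g) \/ gc g = gr (gr g))).
Proof. by []. Qed.

Lemma Gam_child i l : Gam i.+1 l -> Gam i (gl l) /\ Gam i (gr l).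
Proof.
case: i => [|k]; first by move=> [x ->].
by rewrite Gam_SS => -[h1 [_ [h3 _]]].
Qed.

Lemma Gam_node i g : Gam i.+2 g -> g = Node (gl g) (gc g) (gr g).
Proof. by rewrite Gam_SS => -[_ [_ [_ [[a [b [c ->]]] _]]]]. Qed.

Lemma Gam_char i l c r : 1 <= i ->
  (Gam i.+1 (Node l c r) <-> Gam i l /\ Gam i r /\ l <> r /\
     (c = gl l \/ c = gr l) /\ (c = gl r \/ c = gr r)).
Proof.
case: i => [//|k] _; rewrite Gam_SS; cbn [gl gr gc]; split.
- by move=> [h1 [_ [h3 [_ [h5 [h6 h7]]]]]].
- move=> [h1 [h3 [h5 [h6 h7]]]]; split => //; split.
  + by case: h6 => ->; have [] := Gam_child h1.
  + split => //; split => //; by exists l, c, r.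
Qed.

Lemma Gam_shape i g : Gam i g ->
  (i = 0 /\ g = One) \/ (i = 1 /\ exists x, g = Leaf x) \/
  (exists k, i = k.+2 /\ Gam k.+1 (gl g) /\ exists a b c, g = Node a b c).
Proof.
case: i => [|[|k]]; [by left | by right; left |].
rewrite Gam_SS => -[h1 [_ [_ [h4 _]]]]; right; right; by exists k.
Qed.

Lemma Gam_height g : forall i j, Gam i g -> Gam j g -> i = j.
Proof.
elim: g => [|x|a IHa b _ c _] i j /Gam_shape hi /Gam_shape hj.
- case: hi => [[-> _]|[[_ [y e]]|[k [_ [_ [a [b [c e]]]]]]]]; try discriminate.
  by case: hj => [[-> _]|[[_ [y e]]|[k [_ [_ [a [b [c e]]]]]]]]; try discriminate.
- case: hi => [[_ e]|[[-> _]|[k [_ [_ [a [b [c e]]]]]]]]; try discriminate.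
  by case: hj => [[_ e]|[[-> _]|[k [_ [_ [a' [b' [c' e]]]]]]]]; try discriminate.
- case: hi => [[_ e]|[[_ [y e]]|[k [-> [hk _]]]]]; try discriminate.
  case: hj => [[_ e]|[[_ [y e]]|[k' [-> [hk' _]]]]]; try discriminate.
  by have [] := IHa _ _ hk hk' => ->.
Qed.

Lemma Gam_not_one i g : 1 <= i -> Gam i g -> g <> One.
Proof. by move=> hi hg e; subst g; have := Gam_height hg (erefl One : Gam 0 One); lia. Qed.

Lemma GamOf_char i g g1 : 1 <= i -> Gam i g ->
  (GamOf g g1 <-> Gam i.+1 g1 /\ (gl g1 = g \/ gr g1 = g)).
Proof.
move=> hi hg; split; last by move=> [h1 h2]; split => //; exists i.+1.
move=> [[j hj] H]; split => //.
have n1 := Gam_not_one hi hg.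
case: (Gam_shape hj) => [[_ e]|[[_ [x e]]|[k [ej [hk _]]]]]; subst.
- by case: H => e; case: n1; rewrite -e.
- by case: H => e; case: n1; rewrite -e.
- have [_ hk'] := Gam_child hj.
  case: H => e; subst g.
  + by rewrite (Gam_height hg hk).
  + by rewrite (Gam_height hg hk').
Qed.

Definition swap g := match g with Node a b c => Node c b a | _ => g end.

Lemma swapK g : swap (swap g) = g.
Proof. by case: g. Qed.

Lemma swap_inj x y : swap x = swap y -> x = y.
Proof. by move=> e; rewrite -(swapK x) e swapK. Qed.

Lemma Gam_swap i g : Gam i g -> Gam i (swap g).
Proof.
case: i => [|[|k]]; [by move=> -> | by move=> [x ->]; exists x |].
move=> hg; have E := Gam_node hg; rewrite E; cbn [swap]; move: hg; rewrite E.
rewrite !Gam_char // => -[h1 [h2 [h3 [h4 h5]]]].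
by do 3 (split => //); move=> e; apply: h3.
Qed.

Definition A i g g1 := Gam i.+1 g1 /\ gl g1 = g.

Lemma card_GamOf i g p : 1 <= i -> Gam i g -> has_card (A i g) p ->
  has_card (GamOf g) (p + p).
Proof.
move=> hi hg hA.
have hB : has_card (fun g1 => Gam i.+1 g1 /\ gr g1 = g) p.
  apply: hc_ext; last exact: (hc_img (f:=swap) swap_inj hA).
  move=> g1; split.
  - move=> [x [[hx e1] ->]]; split; first exact: Gam_swap.
    case: i hi hg hA hx => [//|k] _ _ _ hx; by rewrite (Gam_node hx) /= -e1.
  - move=> [h1 e]; exists (swap g1); split; last by rewrite swapK.
    split; first exact: Gam_swap.
    case: i hi hg hA h1 => [//|k] _ _ _ hx; by rewrite (Gam_node hx) /= -e.
have Hu := hc_union hA hB.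
apply: hc_ext; last apply: Hu.
- move=> g1; rewrite (GamOf_char _ hi hg) /A; tauto.
- move=> g1 [h1 e1] [_ e2].
  case: i hi hg hA hB h1 => [//|k] _ _ _ _ h1.
  have E := Gam_node h1; move: h1; rewrite E Gam_char // => -[_ [_ [ne _]]].
  by apply: ne; rewrite e1 e2.
Qed.

End Gamma.

Lemma hc_eqn (T : Type) (P : T -> Prop) a b : has_card P a -> a = b -> has_card P b.
Proof. by move=> h <-. Qed.

Lemma In_mem (T : eqType) (x : T) s : In x s <-> x \in s.
Proof.
elim: s => [|a s IH]; first by [].
change (a = x \/ In x s <-> x \in a :: s); rewrite seq.in_cons; split.
- by case=> [->|/IH ->]; [rewrite eqxx | rewrite orbT].
- by case/orP=> [/eqP ->|/IH]; [left | right].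
Qed.

Lemma uniq_NoDup (T : eqType) (s : list T) : uniq s -> NoDup s.
Proof.
elim: s => [|a s IH] /=; first by constructor.
move/andP=> [ha hs]; constructor; last exact: IH.
by move/In_mem; rewrite (negbTE ha).
Qed.

Lemma length_size (T : Type) (s : list T) : length s = size s.
Proof. by elim: s => //= a s ->. Qed.

Fixpoint pp (n i : nat) : nat :=
  match i with 0 => 0 | 1 => n.-1 | S j => 4 * pp n j - 2 end.

Lemma pp_ge1 n i : 2 <= n -> 1 <= i -> 1 <= pp n i.
Proof.
move=> hn; elim: i => [//|j IH] _; case: j IH => [_|j IH]; first by rewrite /=; lia.
have -> : pp n j.+2 = 4 * pp n j.+1 - 2 by [].
have := IH erefl; lia.
Qed.

Lemma pp_closed n i : 2 <= n -> 1 <= i -> 3 * pp n i = 4 ^ (i - 1) * (3 * n - 5) + 2.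
Proof.
move=> hn; elim: i => [//|j IH] _; case: j IH => [_|j IH].
- have -> : pp n 1 = n.-1 by []. rewrite expn0 mul1n; lia.
- have -> : pp n j.+2 = 4 * pp n j.+1 - 2 by [].
  have := IH erefl; have := @pp_ge1 n j.+1 hn erefl.
  rewrite !subSS !subn0 expnS -mulnA.
  move: (4 ^ j * (3 * n - 5)) => u; lia.
Qed.

Section Main.
Variable X : finType.

Lemma hc_leaf : has_card (@Gam X 1) #|X|.
Proof.
exists (map (@Leaf X) (enum X)); split; last split.
- apply: NoDup_map_inj; first by move=> x y [].
  exact/uniq_NoDup/enum_uniq.
- move=> g; rewrite in_map_iff; split.
  + by move=> [x [<- _]]; exists x.
  + by move=> [x ->]; exists x; split => //; apply/In_mem; rewrite mem_enum.
- by rewrite length_map length_size cardE.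
Qed.

Lemma main n : #|X| = n -> 2 <= n -> forall i, 1 <= i -> forall g : gam X,
  Gam i g -> has_card (A i g) (pp n i).
Proof.
move=> hX hn; elim => [//|j IH] _ g.
case: j IH => [_ |j IH] hg.
- case: hg => x ->.
  have H1 := hc_remove hc_leaf (ex_intro _ x erefl : Gam 1 (Leaf x)).
  have inj : forall a b : gam X, Node (Leaf x) One a = Node (Leaf x) One b -> a = b.
    by move=> a b [].
  apply: (@hc_eqn _ _ (#|X| - 1)); last by rewrite -hX subn1.
  apply: hc_ext (hc_img inj H1) => g1; split.
  + move=> [r [[hr ne] ->]]; split => //.
    rewrite Gam_char //; case: hr => y ey; subst r.
    split; first by exists x. split; first by exists y.
    split; first by move=> e; apply: ne.
    by split; left.
  + move=> [h1 e]; have E := Gam_node (h1 : Gam 0.+2 g1); move: h1.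
    rewrite E Gam_char // => -[hl [hr [ne [c1 c2]]]].
    exists (gr g1); split; first by split => //; rewrite -e => e'; apply: ne.
    rewrite E e; case: c1 => ->; rewrite e //.
- have E := Gam_node hg; have [hl hr] := Gam_child hg.
  have ne : gl g <> gr g by move: hg; rewrite Gam_SS; tauto.
  have GL := card_GamOf (isT : 0 < j.+1) hl (IH erefl _ hl).
  have GR := card_GamOf (isT : 0 < j.+1) hr (IH erefl _ hr).
  have oL : GamOf (gl g) g by split; [exists j.+2 | left].
  have oR : GamOf (gr g) g by split; [exists j.+2 | right].
  have inj : forall c (a b : gam X), Node g c a = Node g c b -> a = b by move=> c a b [].
  have R1 := hc_img (inj (gl g)) (hc_remove GL oL).
  have R2 := hc_img (inj (gr g)) (hc_remove GR oR).
  have U := hc_union R1 R2.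
  have {}U := U (ltac:(move=> x [a [_ e1]] [b [_ e2]]; apply: ne;
     by have := f_equal gc (eq_trans (esym e1) e2))).
  have h1 := @pp_ge1 n j.+1 hn erefl.
  apply: (@hc_eqn _ _ ((pp n j.+1 + pp n j.+1 - 1) + (pp n j.+1 + pp n j.+1 - 1))); last first.
    by change (pp n j.+2) with (4 * pp n j.+1 - 2); lia.
  apply: hc_ext U => g1; split.
  + case=> [[r [[hof ner] ->]]|[r [[hof ner] ->]]]; (split; last done);
      rewrite Gam_char //.
    * have [hr1 hor] := proj1 (GamOf_char _ (isT : 0 < j.+1) hl) hof.
      do 2 (split => //); split; first by move=> e; apply: ner.
      split; first by left.
      by case: hor => ->; [left|right].
    * have [hr1 hor] := proj1 (GamOf_char _ (isT : 0 < j.+1) hr) hof.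
      do 2 (split => //); split; first by move=> e; apply: ner.
      split; first by right.
      by case: hor => ->; [left|right].
  + move=> [h1' e]; have E1 := Gam_node h1'; move: h1'.
    rewrite E1 Gam_char // => -[hl1 [hr1 [ne1 [c1 c2]]]].
    rewrite e in c1 ne1.
    case: c1 => ec; [left|right]; exists (gr g1); (split; last by rewrite E1 e ec);
      (split; last by move=> e'; apply: ne1);
      (split; first by exists j.+2);
      by rewrite -ec; case: c2 => ->; [left|right].
Qed.

End Main.

Lemma step (X : finType) n i c : #|X| = n -> 2 <= n -> 1 <= i ->
  has_card (@Gam X i) c -> has_card (@Gam X i.+1) (pp n i * c).
Proof.
move=> hX hn hi [s [Hn [Hs <-]]].
have H := hc_sigma (F := A i) (k := pp n i) Hn
  (fun l hl => main hX hn hi (proj1 (Hs l) hl))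
  (fun l l' x h1 h2 => eq_trans (esym (proj2 h1)) (proj2 h2)).
apply: hc_ext H => x; split.
- by move=> [l [_ [h _]]].
- move=> h; exists (gl x); split; last by split.
  by apply/Hs; have [] := Gam_child h.
Qed.

Lemma card_Gam (X : finType) n : #|X| = n -> 2 <= n -> forall i, 1 <= i ->
  exists c, has_card (@Gam X i) c.
Proof.
move=> hX hn; elim=> [//|j IH] _; case: j IH => [_|j IH].
- by exists #|X|; exact: hc_leaf.
- have [c hc] := IH erefl; exists (pp n j.+1 * c); exact: step.
Qed.

Theorem lemma6p1 (X : finType) (n i : nat) (g : gam X) :
  #|X| = n -> 2 <= n -> 1 <= i -> Gam i g ->
  has_card (GamOf g) ((2 ^ (2 * i - 1) * (3 * n - 5) + 4) %/ 3) /\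
  (exists c : nat, has_card (@Gam X i) c /\
     has_card (@Gam X i.+1) (((4 ^ (i - 1) * (3 * n - 5) + 2) %/ 3) * c)).
Proof.
move=> hX hn hi hg.
have PC := pp_closed hn hi.
split.
- apply: hc_eqn (card_GamOf hi hg (main hX hn hi hg)) _.
  case: i hi hg PC => [//|j] _ _ PC.
  rewrite (_ : 2 * j.+1 - 1 = (2 * j).+1); last lia.
  rewrite expnS expnM (_ : 2 ^ 2 = 4) // -mulnA.
  move: PC; rewrite subSS subn0; move: (4 ^ j * (3 * n - 5)) => u PC.
  rewrite (_ : 2 * u + 4 = 3 * (pp n j.+1 + pp n j.+1)); last lia.
  by rewrite mulKn.
- have [c hc] := card_Gam hX hn hi; exists c; split => //.
  by rewrite -PC mulKn //; exact: step.
Qed.
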